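(* Let $\alpha,\beta,\bar\beta,\Delta,\bar\Delta\in\mathbb{C}$ with $(\Delta,\beta)\neq(0,0)$, $(\bar\Delta,\bar\beta)\neq(0,0)$ and $\bar\beta-\beta=1$. Consider extensions of conformal $\widetilde{\mathrm{SV}}$-modules $$0\to V(\alpha,\bar\beta,\bar\Delta)\to E\to V(\alpha,\beta,\Delta)\to0,$$ realized as $E=\mathbb{C}[\partial]v_{\bar\Delta}\oplus\mathbb{C}[\partial]v_\Delta$ with $\mathbb{C}[\partial]v_{\bar\Delta}\cong V(\alpha,\bar\beta,\bar\Delta)$ a submodule and $$L_\lambda v_\Delta=(\partial+\alpha+\Delta\lambda)v_\Delta+f(\partial,\lambda)v_{\bar\Delta},\ M_\lambda v_\Delta=g(\partial,\lambda)v_{\bar\Delta},\ N_\lambda v_\Delta=\beta v_\Delta+k(\partial,\lambda)v_{\bar\Delta},\ Y_\lambda v_\Delta=h(\partial,\lambda)v_{\bar\Delta},$$ with $f,g,h,k\in\mathbb{C}[\partial,\lambda]$. Nontrivial extensions of this form exist if and only if $\Delta-\bar\Delta=-\tfrac12$ or $(\Delta,\bar\Delta)=(\tfrac{\bar\beta+1}2,\tfrac{\bar\beta}2)$. In these cases they are given, up to equivalence, as follows (with $\bar\partial=\partial+\alpha$): (i) $\Delta-\bar\Delta=-\tfrac12$: $f=g=k=0$ and $h=a_0$ with $a_0\neq0$; (ii) $(\Delta,\bar\Delta)=(\tfrac{\bar\beta+1}2,\tfrac{\bar\beta}2)$: $f=g=k=0$ and $h=a_1(\bar\partial+\bar\beta\lambda)$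 with $a_1\neq0$. Furthermore, $\mathrm{Ext}(V(\alpha,\beta,\Delta),V(\alpha,\beta+1,\bar\Delta))$ is $1$-dimensional in cases (i) and (ii).
   Context: A conformal module over a Lie conformal algebra $R$ is a $\mathbb{C}[\partial]$-module $V$ with $a\mapsto a_\lambda\in\mathrm{End}_{\mathbb{C}}(V)\otimes\mathbb{C}[\lambda]$ satisfying $[a_\lambda,b_\mu]=[a_\lambda b]_{\lambda+\mu}$ and $(\partial a)_\lambda=[\partial,a_\lambda]=-\lambda a_\lambda$. $\widetilde{\mathrm{SV}}$ is the Lie conformal algebra that is the free $\mathbb{C}[\partial]$-module with basis $L,M,Y,N$ whose nonzero $\lambda$-brackets (up to skew-symmetry) are $[L_\lambda L]=(\partial+2\lambda)L$, $[L_\lambda Y]=(\partial+\tfrac32\lambda)Y$, $[L_\lambda M]=(\partial+\lambda)M$, $[Y_\lambda Y]=(\partial+2\lambda)M$, $[L_\lambda N]=(\partial+\lambda)N$, $[N_\lambda M]=2M$, $[N_\lambda Y]=Y$. $V(\alpha,\beta,\Delta)=\mathbb{C}[\partial]v_\Delta$ with $L_\lambda v_\Delta=(\partial+\alpha+\Delta\lambda)v_\Delta$, $N_\lambda v_\Delta=\beta v_\Delta$, $M_\lambda v_\Delta=Y_\lambda v_\Delta=0$. An extension of $W$ by $V$ is an exact sequence $0\to V\to E\to W\to0$ of conformal modules; equivalence via a module map of middle terms compatible with identities; trivial means equivalent to the direct sum. $\mathrm{Ext}(W,V)$ is the space of extension cocycles modulo coboundaries. *)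

(* Defs.v *)
From HB Require Import structures.
From mathcomp Require Import all_boot all_algebra.
From mathcomp Require Import reals complex.
Set Implicit Arguments. Unset Strict Implicit. Unset Printing Implicit Defensive.
Import GRing.Theory.
Local Open Scope ring_scope.

Section SV.
Variable R : realType.
Local Notation C := (R[i]).

(* Basis {L, M, Y, N} of the free C[d]-module SV~. *)
Inductive gen := gL | gM | gY | gN.

(* Structure polynomials of the lambda-bracket:
   [a_lambda b] = sum_x (lbr a b x d lambda) x, where lbr a b x is the
   polynomial P_{abx}(d, lambda) written as a (polynomial) function.
   The entries for reversed pairs are obtained from the given ones by
   skew-symmetry [b_lambda a] = - [a_{-lambda-d} b]. *)
Definition lbr (a b x : gen) (d l : C) : C :=
  match a, b, x with
  | gL, gL, gL => d + 2 * l
  | gL, gY, gY => d + 3 / 2 * l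
  | gY, gL, gY => 1 / 2 * d + 3 / 2 * l
  | gL, gM, gM => d + l
  | gM, gL, gM => l
  | gY, gY, gM => d + 2 * l
  | gL, gN, gN => d + l
  | gN, gL, gN => l
  | gN, gM, gM => 2
  | gM, gN, gM => -2
  | gN, gY, gY => 1
  | gY, gN, gY => -1
  | _, _, _ => 0
  end.

(* The middle term E = C[d] vbar (+) C[d] v : an element p(d) vbar + q(d) v
   is the pair (p, q). *)
Definition E := ({poly C} * {poly C})%type.

Definition addE (u w : E) : E := (u.1 + w.1, u.2 + w.2).
Definition oppE (u : E) : E := (- u.1, - u.2).
Definition pscale (r : {poly C}) (u : E) : E := (r * u.1, r * u.2).
Definition cscale (c : C) (u : E) : E := pscale c%:P u.

(* A lambda-action, with lambda specialised to a number: gen -> C -> End E. *)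
Definition action := gen -> C -> E -> E.

(* Conformal module axiom [a_lambda, b_mu] = [a_lambda b]_{lambda+mu},
   where (P(d,lambda) x)_{lambda+mu} = P(-lambda-mu, lambda) x_{lambda+mu}
   (from (d a)_lambda = - lambda a_lambda). *)
Definition conformal (act : action) : Prop :=
  forall (a b : gen) (l m : C) (u : E),
    addE (act a l (act b m u)) (oppE (act b m (act a l u))) =
    addE (addE (cscale (lbr a b gL (- (l + m)) l) (act gL (l + m) u))
               (cscale (lbr a b gM (- (l + m)) l) (act gM (l + m) u)))
         (addE (cscale (lbr a b gY (- (l + m)) l) (act gY (l + m) u))
               (cscale (lbr a b gN (- (l + m)) l) (act gN (l + m) u))).

(* Bivariate polynomials f(d, lambda) = sum_i f_i(d) lambda^i, represented
   as {poly {poly C}} (outer variable lambda, inner variable d). *)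
Record cocyc := Cocyc { cf : {poly {poly C}}; cg : {poly {poly C}};
                        ch : {poly {poly C}}; ck : {poly {poly C}} }.

Definition cocyc0 := Cocyc 0 0 0 0.

Definition cocyc_subZ (c : cocyc) (a : C) (c0 : cocyc) : cocyc :=
  Cocyc (cf c - a%:P%:P * cf c0) (cg c - a%:P%:P * cg c0)
        (ch c - a%:P%:P * ch c0) (ck c - a%:P%:P * ck c0).

(* The lambda-action on E determined by (f, g, h, k):
   the submodule C[d] vbar is V(al, bb, Db), and
   L_l v = (d + al + D l) v + f(d,l) vbar, M_l v = g(d,l) vbar,
   N_l v = b v + k(d,l) vbar,  Y_l v = h(d,l) vbar,
   extended by  x_l (p(d) w) = p(d + l) x_l w. *)
Definition ext_act (al b D bb Db : C) (c : cocyc) : action :=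
  fun x l u =>
    let s (p : {poly C}) := p \Po ('X + l%:P) in
    let xvbar : E := match x with
      | gL => ('X + (al + Db * l)%:P, 0)
      | gN => (bb%:P, 0)
      | _ => (0, 0) end in
    let xv : E := match x with
      | gL => ((cf c).[l%:P], 'X + (al + D * l)%:P)
      | gM => ((cg c).[l%:P], 0)
      | gY => ((ch c).[l%:P], 0)
      | gN => ((ck c).[l%:P], b%:P) end in
    addE (pscale (s u.1) xvbar) (pscale (s u.2) xv).

Definition is_ext (al b D bb Db : C) (c : cocyc) : Prop :=
  conformal (ext_act al b D bb Db c).

Definition module_map (A B : action) (phi : E -> E) : Prop :=
  (forall u w, phi (addE u w) = addE (phi u) (phi w)) /\
  (forall (r : {poly C}) u, phi (pscale r u) = pscale r (phi u)) /\
  (forall x l u, phi (A x l u) = B x l (phi u)).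

(* Equivalence of extensions: a module map of middle terms which is the
   identity on the submodule C[d] vbar and induces the identity on the
   quotient C[d] v. *)
Definition ext_equiv (al b D bb Db : C) (c c' : cocyc) : Prop :=
  exists phi : E -> E,
    module_map (ext_act al b D bb Db c) (ext_act al b D bb Db c') phi /\
    (forall p : {poly C}, phi (p, 0) = (p, 0)) /\
    (forall u, (phi u).2 = u.2).

Definition ext_trivial (al b D bb Db : C) (c : cocyc) : Prop :=
  ext_equiv al b D bb Db c cocyc0.

(* dim Ext = 1 : the quotient of the space of cocycles by the coboundaries
   (trivial cocycles) is one-dimensional. *)
Definition Ext_dim1 (al b D bb Db : C) : Prop :=
  exists c0, is_ext al b D bb Db c0 /\ ~ ext_trivial al b D bb Db c0 /\
    forall c, is_ext al b D bb Db c ->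
      exists a : C, ext_trivial al b D bb Db (cocyc_subZ c a c0).

End SV.

(* Main.v *)
Require Import Defs.
From HB Require Import structures.
From mathcomp Require Import all_boot all_algebra.
From mathcomp Require Import reals complex.
From mathcomp Require Import ring.
Import GRing.Theory Num.Theory.
Local Open Scope ring_scope.
Section S.
Variable R : realType.
Local Notation C := (R[i]).

Lemma poly_off (p : {poly C}) (x0 : C) : (forall x, x != x0 -> p.[x] = 0) -> p = 0.
Proof.
move=> H.
apply: (@roots_geq_poly_eq0 _ p [seq x0 + i.+1%:R | i <- iota 0 (size p)]).
- apply/allP => y /mapP [i _ ->]; apply/eqP/H.
  by rewrite -{2}[x0]addr0 (inj_eq (addrI x0)) pnatr_eq0.
- rewrite map_inj_uniq ?iota_uniq // => i j /addrI /eqP.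
  by rewrite eqr_nat eqSS => /eqP.
- by rewrite size_map size_iota.
Qed.

Lemma poly_const_off (p : {poly C}) (x0 K : C) :
  (forall x, x != x0 -> p.[x] = K) -> p = K%:P.
Proof.
move=> H; apply/eqP; rewrite -subr_eq0; apply/eqP/(@poly_off _ x0) => x hx.
by rewrite !hornerE H // subrr.
Qed.

Lemma poly_ev (p q : {poly C}) : (forall x, p.[x] = q.[x]) -> p = q.
Proof.
move=> H; apply/eqP; rewrite -subr_eq0; apply/eqP/(@poly_off _ 0) => x _.
rewrite !hornerE. by rewrite H subrr.
Qed.


Definition Sx (F : gen -> C -> C -> C) a b' l m y :=
  lbr a b' gL (-(l+m)) l * F gL (l+m) y + lbr a b' gM (-(l+m)) l * F gM (l+m) y +
  (lbr a b' gY (-(l+m)) l * F gY (l+m) y + lbr a b' gN (-(l+m)) l * F gN (l+m) y).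

Definition K1e (F1 : gen -> C -> C -> C) a b' l m y :=
  F1 b' m (y+l) * F1 a l y - F1 a l (y+m) * F1 b' m y - Sx F1 a b' l m y.
Definition K2e (F1 F2 F3 : gen -> C -> C -> C) a b' l m y :=
  F2 b' m (y+l) * F1 a l y + F3 b' m (y+l) * F2 a l y
  - (F2 a l (y+m) * F1 b' m y + F3 a l (y+m) * F2 b' m y) - Sx F2 a b' l m y.
Definition K3e (F3 : gen -> C -> C -> C) a b' l m y :=
  F3 b' m (y+l) * F3 a l y - F3 a l (y+m) * F3 b' m y - Sx F3 a b' l m y.

Lemma ev1_add (u w : E R) y : ((addE u w).1).[y] = u.1.[y] + w.1.[y].
Proof. by rewrite /= hornerD. Qed.
Lemma ev2_add (u w : E R) y : ((addE u w).2).[y] = u.2.[y] + w.2.[y].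
Proof. by rewrite /= hornerD. Qed.
Lemma ev1_opp (u : E R) y : ((oppE u).1).[y] = - u.1.[y].
Proof. by rewrite /= hornerN. Qed.
Lemma ev2_opp (u : E R) y : ((oppE u).2).[y] = - u.2.[y].
Proof. by rewrite /= hornerN. Qed.
Lemma ev1_cs c (u : E R) y : ((cscale c u).1).[y] = c * u.1.[y].
Proof. by rewrite /= hornerCM. Qed.
Lemma ev2_cs c (u : E R) y : ((cscale c u).2).[y] = c * u.2.[y].
Proof. by rewrite /= hornerCM. Qed.

Lemma E_ext (u w : E R) : (forall y, u.1.[y] = w.1.[y]) -> (forall y, u.2.[y] = w.2.[y]) -> u = w.
Proof.
by case: u => u1 u2; case: w => w1 w2 /= h1 h2; rewrite (poly_ev _ _ h1) (poly_ev _ _ h2).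
Qed.

Lemma hs (r : {poly C}) (y u v : C) : r.[y + u + v] = r.[y + (u + v)].
Proof. by rewrite GRing.addrA. Qed.

Section Gen.
Variable A : action R.
Variables F1 F2 F3 : gen -> C -> C -> C.
Hypothesis h1 : forall x l (u : E R) y, ((A x l u).1).[y] = u.1.[y + l] * F1 x l y + u.2.[y + l] * F2 x l y.
Hypothesis h2 : forall x l (u : E R) y, ((A x l u).2).[y] = u.2.[y + l] * F3 x l y.

Lemma conf_suff : (forall a b' l m y, [/\ K1e F1 a b' l m y = 0, K2e F1 F2 F3 a b' l m y = 0 & K3e F3 a b' l m y = 0]) ->
  conformal A.
Proof.
move=> K a b' l m u.
apply: E_ext => y; have [k1 k2 k3] := K a b' l m y; rewrite !(ev1_add, ev2_add, ev1_opp, ev2_opp, ev1_cs, ev2_cs, h1, h2) !hs (addrC m l).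
- apply/eqP; rewrite -subr_eq0; apply/eqP.
  transitivity (u.1.[y + (l+m)] * K1e F1 a b' l m y + u.2.[y + (l+m)] * K2e F1 F2 F3 a b' l m y).
    by rewrite /K1e /K2e /Sx; ring.
  by rewrite k1 k2 !mulr0 addr0.
- apply/eqP; rewrite -subr_eq0; apply/eqP.
  transitivity (u.2.[y + (l+m)] * K3e F3 a b' l m y).
    by rewrite /K3e /Sx; ring.
  by rewrite k3 mulr0.
Qed.

Lemma conf_nec : conformal A -> forall a b' l m y, K2e F1 F2 F3 a b' l m y = 0.
Proof.
move=> H a b' l m y; have := congr1 (fun w : E R => w.1.[y]) (H a b' l m (0, 1)).
rewrite !(ev1_add, ev2_add, ev1_opp, ev2_opp, ev1_cs, ev2_cs, h1, h2) /= ?hornerC ?horner0.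
move/eqP; rewrite -subr_eq0 => /eqP e; rewrite -e /K2e /Sx; ring.
Qed.
End Gen.

Variables (al b D bb Db : C).
Hypothesis hbb : bb - b = 1.


Definition vb1 (x : gen) (l y : C) : C :=
  match x with gL => y + (al + Db * l) | gN => bb | _ => 0 end.
Definition v1 (c : cocyc R) (x : gen) (l y : C) : C :=
  match x with gL => (cf c).[l%:P].[y] | gM => (cg c).[l%:P].[y]
  | gY => (ch c).[l%:P].[y] | gN => (ck c).[l%:P].[y] end.
Definition v2 (x : gen) (l y : C) : C :=
  match x with gL => y + (al + D * l) | gN => b | _ => 0 end.

Lemma act1 c x l (u : E R) y :
  ((ext_act al b D bb Db c x l u).1).[y] = u.1.[y + l] * vb1 x l y + u.2.[y + l] * v1 c x l y.
Proof. by case: x; rewrite /ext_act /= !(hornerE, horner_comp). Qed.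
Lemma act2 c x l (u : E R) y :
  ((ext_act al b D bb Db c x l u).2).[y] = u.2.[y + l] * v2 x l y.
Proof. by case: x; rewrite /ext_act /= !(hornerE, horner_comp). Qed.


Lemma ext_conf_suff c :
  (forall a b' l m y, [/\ K1e vb1 a b' l m y = 0, K2e vb1 (v1 c) v2 a b' l m y = 0 & K3e v2 a b' l m y = 0]) ->
  is_ext al b D bb Db c.
Proof. exact: (@conf_suff _ vb1 (v1 c) v2 (act1 c) (act2 c)). Qed.

Lemma ext_conf_nec c : is_ext al b D bb Db c -> forall a b' l m y, K2e vb1 (v1 c) v2 a b' l m y = 0.
Proof. exact: (@conf_nec _ vb1 (v1 c) v2 (act1 c) (act2 c)). Qed.


Definition hv (x : gen) (h : C -> C -> C) (l y : C) : C := match x with gY => h l y | _ => 0 end.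

Lemma v1_h (h : {poly {poly C}}) x l y : v1 (Cocyc 0 0 h 0) x l y = hv x (fun l y => h.[l%:P].[y]) l y.
Proof. by case: x; rewrite /v1 /hv /= ?horner0. Qed.

Lemma suffI (a0 : C) : D - Db = - (1/2) -> is_ext al b D bb Db (Cocyc 0 0 a0%:P%:P 0).
Proof.
move=> hD.
have eD : D = Db - 1/2 by rewrite -hD; ring.
have eb : b = bb - 1 by rewrite -hbb; ring.
apply: ext_conf_suff => a b' l m y.
rewrite /K1e /K2e /K3e /Sx !v1_h.
case: a; case: b'; cbv beta iota delta [vb1 v2 lbr hv]; rewrite ?hornerC.

all: split; rewrite ?eD ?eb; field; by [].

Qed.

Lemma hII_ev (a1 l y : C) : (a1%:P%:P * (('X + al%:P)%:P + bb%:P%:P * 'X)).[l%:P].[y] = a1 * (y + al + bb * l).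
Proof. by rewrite !(hornerM, hornerD, hornerC, hornerX). Qed.

Lemma suffII (a1 : C) : D = (bb + 1) / 2 /\ Db = bb / 2 ->
  is_ext al b D bb Db (Cocyc 0 0 (a1%:P%:P * (('X + al%:P)%:P + bb%:P%:P * 'X)) 0).
Proof.
move=> [eD eDb].
have eb : b = bb - 1 by rewrite -hbb; ring.
apply: ext_conf_suff => a b' l m y.
rewrite /K1e /K2e /K3e /Sx !v1_h.
case: a; case: b'; cbv beta iota delta [vb1 v2 lbr hv]; rewrite ?hII_ev.
all: split; rewrite ?eD ?eDb ?eb; field; by [].
Qed.

Lemma lin_sol (X Y P Q k : C) : X - Y = k * (P - Q) -> P = Q -> X = Y.
Proof. by move=> e pq; apply/eqP; rewrite -subr_eq0 e pq subrr mulr0. Qed.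

Lemma nec_facts c : is_ext al b D bb Db c ->
  [/\ (forall l y, (ck c).[l%:P].[y] = bb * (ck c).[0%:P].[y + l] - b * (ck c).[0%:P].[y]),
      (forall l y, (cf c).[l%:P].[y] = (y + (al + Db * l)) * (ck c).[0%:P].[y + l]
                                        - (y + (al + D * l)) * (ck c).[0%:P].[y]),
      (forall l y, (cg c).[l%:P].[y] = 0),
      (forall l y, (ch c).[l%:P].[y] = bb * (ch c).[0%:P].[y + l] - b * (ch c).[0%:P].[y]) &
      (forall l y, (ch c).[0%:P].[y + l] * (y + (al + Db * l)) - (y + (al + D * l)) * (ch c).[0%:P].[y]
                    = l / 2 * (ch c).[l%:P].[y])].
Proof.
move=> Hc; have K := ext_conf_nec _ Hc.
have eb : b = bb - 1 by rewrite -hbb; ring.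
have Fk : forall l y, (ck c).[l%:P].[y] = bb * (ck c).[0%:P].[y + l] - b * (ck c).[0%:P].[y].
  move=> l y; move: (K gN gN l 0 y); rewrite /K2e /Sx; cbv beta iota delta [vb1 v1 v2 lbr].
  rewrite !addr0 => e; apply: (@lin_sol _ _ _ _ (-1) _ e). rewrite eb; ring.
split => //.
- move=> l y; move: (K gL gN l 0 y); rewrite /K2e /Sx; cbv beta iota delta [vb1 v1 v2 lbr].
  rewrite !addr0 Fk => e; apply: (@lin_sol _ _ _ _ (-1) _ e). rewrite eb; ring.
- move=> n y; move: (K gY gY ((n + 1) / 2) ((n - 1) / 2) y); rewrite /K2e /Sx; cbv beta iota delta [vb1 v1 v2 lbr].
  have -> : (n + 1) / 2 + (n - 1) / 2 = n by field; by [].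
  move=> e; apply: (@lin_sol _ _ _ _ (-1) _ e). field; by [].
- move=> l y; move: (K gN gY l 0 y); rewrite /K2e /Sx; cbv beta iota delta [vb1 v1 v2 lbr].
  rewrite !addr0 => e; apply: (@lin_sol _ _ _ _ (-1) _ e). ring.
- move=> l y; move: (K gL gY l 0 y); rewrite /K2e /Sx; cbv beta iota delta [vb1 v1 v2 lbr].
  rewrite !addr0 => e; apply: (@lin_sol _ _ _ _ 1 _ e). field; by [].
Qed.

Lemma h_analysis (H : {poly C}) (h : C -> C -> C) :
 (forall l y, h l y = bb * H.[y + l] - b * H.[y]) ->
 (forall l y, H.[y + l] * (y + (al + Db * l)) - (y + (al + D * l)) * H.[y] = l / 2 * h l y) ->
 (exists K, (forall l y, h l y = K) /\ (K != 0 -> D - Db = -(1/2))) \/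
 (exists K, (forall l y, h l y = K * (y + al + bb * l)) /\ (K != 0 -> D = (bb+1)/2 /\ Db = bb/2)).
Proof.
move=> hN hL.
have eb : b = bb - 1 by rewrite -hbb; ring.
pose A := Db - bb/2; pose B := D - b/2.
have E2 : forall l y, (y + al + A * l) * H.[y + l] = (y + al + B * l) * H.[y].
  move=> l y; apply: (@lin_sol _ _ _ _ 1 _ (hL l y)); rewrite hN /A /B; field; by [].
have nzP : forall y z : C, y != - z -> y + z != 0.
  move=> y z hyz; apply/negP => /eqP e; move: hyz; by rewrite -(addrK z y) e sub0r eqxx.
have E0 : forall y, y != -al -> (1 - A) * H.[-al] = (1 - B) * H.[y].
  move=> y hy; have := E2 (-(y+al)) y.
  have -> : y + -(y + al) = -al by ring.
  move=> e; apply: (mulfI (nzP _ _ hy)).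
  transitivity ((y + al + A * - (y + al)) * H.[-al]); first by ring.
  by rewrite e; ring.
have AB_I : A = B -> D - Db = -(1/2).
  move=> AB; apply: (@lin_sol _ _ _ _ (-1) _ AB); rewrite /A /B eb; field; by [].
have [B1|B1] := eqVneq B 1; last first.
  pose K := (1 - A) * H.[-al] / (1 - B).
  have HK : H = K%:P.
    apply: (@poly_const_off _ (-al)) => y hy; rewrite /K (E0 y hy); field.
    by rewrite subr_eq0 eq_sym.
  left; exists K; split.
    by move=> l y; rewrite hN HK !hornerC eb; ring.
  move=> Kn; apply: AB_I; have := E2 1 0; rewrite HK !hornerC !add0r !mulr1.
  by move/(mulIf Kn)/addrI.
have n1 : 1 - al != - al.
  apply/negP => /eqP e; move: (congr1 (fun z => z + al) e).
  by rewrite subrK addNr => /eqP; rewrite oner_eq0.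
have HA : (1 - A) * H.[-al] = 0 by rewrite (E0 _ n1) B1 subrr mul0r.
have [A1|A1] := eqVneq A 1.
  pose K := H.[-al].
  have HK : H = K%:P.
    apply: (@poly_const_off _ (-al)) => z hz.
    have := E2 (z + al) (-al); rewrite A1 B1.
    have -> : -al + (z + al) = z by ring.
    move=> e; apply: (mulfI (nzP _ _ hz)); rewrite /K.
    transitivity ((- al + al + 1 * (z + al)) * H.[z]); first by ring.
    by rewrite e; ring.
  left; exists K; split.
    by move=> l y; rewrite hN HK !hornerC eb; ring.
  by move=> _; apply: AB_I; rewrite A1 B1.
have H0 : H.[-al] = 0.
  by move/eqP: HA; rewrite mulf_eq0 subr_eq0 eq_sym (negbTE A1) /= => /eqP.
have /factor_theorem [G eH] : root H (-al) by apply/eqP.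
have HG : forall y, H.[y] = G.[y] * (y + al).
  by move=> y; rewrite eH hornerM hornerXsubC opprK.
have QG : forall l, l != 0 -> G.[-(al + l)] = (1 - A) * G.[-al].
  move=> l ln.
  pose Q := ('X + (al + A * l)%:P) * (G \Po ('X + l%:P)) - ('X + al%:P) * G.
  have Qev : forall y, Q.[y] = (y + (al + A * l)) * G.[y + l] - (y + al) * G.[y].
    by move=> y; rewrite /Q !(hornerD, hornerN, hornerM, horner_comp, hornerX, hornerC).
  have Q0 : Q = 0.
    apply: (@poly_off _ (-(al + l))) => y hy.
    have nz : y + l + al != 0.
      by rewrite -addrA (addrC l al) nzP.
    apply: (mulIf nz); rewrite mul0r Qev.
    have e := E2 l y; rewrite !HG B1 in e.
    transitivity ((y + al + A*l) * (G.[y+l] * (y + l + al)) - (y + al + 1 * l) * (G.[y] * (y + al))).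
      by ring.
    by rewrite e subrr.
  have := Qev (-(al + l)); rewrite Q0 horner0.
  have -> : -(al + l) + l = -al by ring.
  move=> e; apply: (mulfI ln); apply: (@lin_sol _ _ _ _ 1 _ (esym e)); ring.
pose K := (1 - A) * G.[-al].
have GK : G = K%:P.
  apply: (@poly_const_off _ (-al)) => z hz.
  have zn : -(z + al) != 0 by rewrite oppr_eq0 nzP.
  have := QG _ zn; rewrite /K.
  by have -> : -(al + - (z + al)) = z by ring.
right; exists K; split.
  by move=> l y; rewrite hN !HG GK !hornerC eb; ring.
move=> Kn; have := E2 1 (-al); rewrite !HG GK !hornerC B1 => e.
have : A * K = 0.
  transitivity ((-al + al + A*1) * (K * (-al + 1 + al)) - (-al + al + 1*1) * (K * (-al + al))).
    by ring.
  by rewrite e subrr.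
move/eqP; rewrite mulf_eq0 (negbTE Kn) orbF => /eqP A0.
split.
  by apply: (@lin_sol _ _ _ _ 1 _ B1); rewrite /B eb; field.
by apply: (@lin_sol _ _ _ _ 1 _ A0); rewrite /A; ring.
Qed.

Lemma equiv_r c c' (r : {poly C}) :
 (forall l y, (cf c).[l%:P].[y] = (cf c').[l%:P].[y] + ((y + (al + Db * l)) * r.[y + l] - (y + (al + D * l)) * r.[y])) ->
 (forall l y, (cg c).[l%:P].[y] = (cg c').[l%:P].[y]) ->
 (forall l y, (ch c).[l%:P].[y] = (ch c').[l%:P].[y]) ->
 (forall l y, (ck c).[l%:P].[y] = (ck c').[l%:P].[y] + (bb * r.[y + l] - b * r.[y])) ->
 ext_equiv al b D bb Db c c'.
Proof.
move=> hf hg hh hk.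
exists (fun u : E R => (u.1 + u.2 * r, u.2)); split; last first.
  split; last by [].
  by move=> p; cbv beta delta [fst snd] iota; rewrite mul0r addr0.
split.
  move=> [u1 u2] [w1 w2]; rewrite /addE; cbv beta delta [fst snd] iota; congr (_, _); ring.
split.
  move=> p [u1 u2]; rewrite /pscale; cbv beta delta [fst snd] iota; congr (_, _); ring.
move=> x l u; apply: E_ext => y; cbv beta delta [fst snd] iota.
- rewrite hornerD hornerM act1 act2 act1; cbv beta delta [fst snd] iota.
  rewrite hornerD hornerM.
  case: x; cbv beta delta [vb1 v1 v2] iota; rewrite ?hf ?hg ?hh ?hk; ring.
- by rewrite !act2.
Qed.

Lemma equiv_h c c' : ext_equiv al b D bb Db c c' -> forall l y, (ch c).[l%:P].[y] = (ch c').[l%:P].[y].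
Proof.
move=> [phi [[_ [_ hint]] [hp h2]]] l y.
have e1 : ext_act al b D bb Db c gY l (0, 1) = ((ch c).[l%:P], 0).
  apply: E_ext => z; rewrite ?act1 ?act2; cbv beta delta [fst snd vb1 v1 v2] iota;
    rewrite ?horner0 ?hornerC; ring.
have := congr1 (fun w : E R => w.1.[y]) (hint gY l (0,1)).
rewrite e1 hp act1 h2; cbv beta delta [fst snd vb1 v1] iota.
by rewrite hornerC mulr0 add0r mul1r.
Qed.

Lemma nontriv_of_h c : (exists l y, (ch c).[l%:P].[y] != 0) -> ~ ext_trivial al b D bb Db c.
Proof.
move=> [l [y hn]] E; have := equiv_h _ _ E l y; rewrite /cocyc0; cbv beta delta [ch] iota.
by rewrite !horner0 => e; rewrite e eqxx in hn.
Qed.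

Lemma equiv_to c h' : is_ext al b D bb Db c -> (forall l y, (ch c).[l%:P].[y] = h'.[l%:P].[y]) ->
  ext_equiv al b D bb Db c (Cocyc 0 0 h' 0).
Proof.
move=> hc hh; have [Fk Ff Fg _ _] := nec_facts _ hc.
apply: (equiv_r _ _ ((ck c).[0%:P])) => l y; cbv beta delta [cf cg ch ck] iota; rewrite ?horner0 ?add0r //.
Qed.

Lemma triv_of_h c : is_ext al b D bb Db c -> (forall l y, (ch c).[l%:P].[y] = 0) -> ext_trivial al b D bb Db c.
Proof.
move=> hc hh; apply: equiv_to => // l y; by rewrite hh !horner0.
Qed.

Lemma dim1_of (h0 : {poly {poly C}}) :
  is_ext al b D bb Db (Cocyc 0 0 h0 0) -> (exists l y, h0.[l%:P].[y] != 0) ->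
  (forall c, is_ext al b D bb Db c -> exists a, forall l y, (ch c).[l%:P].[y] = a * h0.[l%:P].[y]) ->
  Ext_dim1 al b D bb Db.
Proof.
move=> he hn H; exists (Cocyc 0 0 h0 0); split => //; split; first exact: nontriv_of_h.
move=> c hc; have [a ha] := H c hc; exists a.
have [Fk Ff Fg _ _] := nec_facts _ hc.
apply: (equiv_r _ _ ((ck c).[0%:P])) => l y; rewrite /cocyc_subZ /cocyc0; cbn [cf cg ch ck];
  rewrite ?mulr0 ?subr0 ?horner0 ?add0r //.
by rewrite !(hornerD, hornerN, hornerM, hornerC) ha subrr.
Qed.

Lemma classify c : is_ext al b D bb Db c ->
 (exists K, (forall l y, (ch c).[l%:P].[y] = K) /\ (K != 0 -> D - Db = -(1/2))) \/
 (exists K, (forall l y, (ch c).[l%:P].[y] = K * (y + al + bb * l)) /\ (K != 0 -> D = (bb+1)/2 /\ Db = bb/2)).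
Proof.
move=> hc; have [_ _ _ Fh FL] := nec_facts _ hc.
exact: (@h_analysis ((ch c).[0%:P]) (fun l y => (ch c).[l%:P].[y])).
Qed.

Lemma I_II : D - Db = -(1/2) -> D = (bb+1)/2 /\ Db = bb/2 -> False.
Proof.
move=> hI [eD eDb]; rewrite eD eDb in hI.
have : (1 : C) = 0 by apply: (@lin_sol _ _ _ _ 1 _ hI); field.
by move/eqP; rewrite oner_eq0.
Qed.
End S.

Theorem theorem5p8 (R : realType) (al b bb D Db : R[i]) :
  (D, b) != (0, 0) -> (Db, bb) != (0, 0) -> bb - b = 1 ->
  let caseI := D - Db = - (1 / 2) in
  let caseII := D = (bb + 1) / 2 /\ Db = bb / 2 in
  ((exists c, is_ext al b D bb Db c /\ ~ ext_trivial al b D bb Db c)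
     <-> caseI \/ caseII) /\
  (caseI ->
     (forall a0 : R[i], a0 != 0 ->
        is_ext al b D bb Db (Cocyc 0 0 a0%:P%:P 0) /\
        ~ ext_trivial al b D bb Db (Cocyc 0 0 a0%:P%:P 0)) /\
     (forall c, is_ext al b D bb Db c -> ~ ext_trivial al b D bb Db c ->
        exists a0 : R[i], a0 != 0 /\
          ext_equiv al b D bb Db c (Cocyc 0 0 a0%:P%:P 0)) /\
     Ext_dim1 al b D bb Db) /\
  (caseII ->
     let hII (a1 : R[i]) : {poly {poly R[i]}} :=
       a1%:P%:P * (('X + al%:P)%:P + bb%:P%:P * 'X) in
     (forall a1 : R[i], a1 != 0 ->
        is_ext al b D bb Db (Cocyc 0 0 (hII a1) 0) /\
        ~ ext_trivial al b D bb Db (Cocyc 0 0 (hII a1) 0)) /\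
     (forall c, is_ext al b D bb Db c -> ~ ext_trivial al b D bb Db c ->
        exists a1 : R[i], a1 != 0 /\
          ext_equiv al b D bb Db c (Cocyc 0 0 (hII a1) 0)) /\
     Ext_dim1 al b D bb Db).
Proof.
move=> _ _ hbb; cbv beta zeta.
have cl := @classify R al b D bb Db hbb.
have tr := @triv_of_h R al b D bb Db hbb.
have ntr := @nontriv_of_h R al b D bb Db.
have eqt := @equiv_to R al b D bb Db hbb.
have d1 := @dim1_of R al b D bb Db hbb.
have sI := @suffI R al b D bb Db hbb.
have sII := @suffII R al b D bb Db hbb.
have I2 := @I_II R D bb Db.
have hv := @hII_ev R al bb.
have nzI : forall a0 : R[i], a0 != 0 -> exists l y, (a0%:P%:P : {poly {poly R[i]}}).[l%:P].[y] != 0.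
  by move=> a0 ha; exists 0, 0; rewrite !hornerC.
have nzII : forall a1 : R[i], a1 != 0 ->
    exists l y, (a1%:P%:P * (('X + al%:P)%:P + bb%:P%:P * 'X)).[l%:P].[y] != 0.
  by move=> a1 ha; exists 0, (1 - al); rewrite hv mulr0 addr0 subrK mulr1.
have key_h : forall c, is_ext al b D bb Db c -> ~ ext_trivial al b D bb Db c ->
   (exists K, K != 0 /\ (forall l y, (ch c).[l%:P].[y] = K) /\ D - Db = -(1/2)) \/
   (exists K, K != 0 /\ (forall l y, (ch c).[l%:P].[y] = K * (y + al + bb * l)) /\
        (D = (bb+1)/2 /\ Db = bb/2)).
  move=> c hc hnt; case: (cl c hc) => [[K [hK cK]]|[K [hK cK]]].
  - have Kn : K != 0.
      by apply/negP => /eqP K0; apply: hnt; apply: tr => // l y; rewrite hK K0.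
    by left; exists K; split => //; split => //; exact: cK Kn.
  - have Kn : K != 0.
      by apply/negP => /eqP K0; apply: hnt; apply: tr => // l y; rewrite hK K0 mul0r.
    by right; exists K; split => //; split => //; exact: cK Kn.
split.
  split.
  - move=> [c [hc hnt]]; case: (key_h c hc hnt) => [[K [_ [_ ?]]]|[K [_ [_ ?]]]]; [left|right] => //.
  - case=> [hI|hII].
    + exists (Cocyc 0 0 1%:P%:P 0); split; first exact: sI.
      by apply: ntr; apply: nzI; exact: oner_neq0.
    + exists (Cocyc 0 0 (1%:P%:P * (('X + al%:P)%:P + bb%:P%:P * 'X)) 0); split; first exact: sII.
      by apply: ntr; apply: nzII; exact: oner_neq0.
split.
- move=> hI; split; [|split].
  + move=> a0 ha; split; first exact: sI.
    by apply: ntr; exact: nzI.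
  + move=> c hc hnt; case: (key_h c hc hnt) => [[K [Kn [hK _]]]|[K [_ [_ hII]]]]; last by case: (I2 hI hII).
    exists K; split => //; apply: eqt => // l y; by rewrite hK !hornerC.
  + apply: (d1 (1%:P%:P)); [exact: sI | apply: nzI; exact: oner_neq0 |].
    move=> c hc; case: (cl c hc) => [[K [hK _]]|[K [hK cK]]].
      by exists K => l y; rewrite hK !hornerC mulr1.
    have K0 : K = 0 by have [//|Kn] := eqVneq K 0; case: (I2 hI (cK Kn)).
    by exists 0 => l y; rewrite hK K0 !mul0r.
- move=> hII; split; [|split].
  + move=> a1 ha; split; first exact: sII.
    by apply: ntr; exact: nzII.
  + move=> c hc hnt; case: (key_h c hc hnt) => [[K [_ [_ hI]]]|[K [Kn [hK _]]]]; first by case: (I2 hI hII).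
    exists K; split => //; apply: eqt => // l y; by rewrite hK hv.
  + apply: (d1 (1%:P%:P * (('X + al%:P)%:P + bb%:P%:P * 'X))); [exact: sII | apply: nzII; exact: oner_neq0 |].
    move=> c hc; case: (cl c hc) => [[K [hK cK]]|[K [hK _]]].
      have K0 : K = 0 by have [//|Kn] := eqVneq K 0; case: (I2 (cK Kn) hII).
      by exists 0 => l y; rewrite hK K0 !mul0r.
    by exists K => l y; rewrite hK hv mul1r.
Qed.
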